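(* Let $U\subseteq\mathbb{R}$ be open, let $\widetilde{H}\subseteq U$ be Lebesgue measurable and let $\varepsilon>0$. Then there is an open set $H\subseteq U$ such that $|\widetilde{H}\setminus H|=0$ and, for every bounded connected component $I=(a,b)$ of $H$, the point $a$ is a right density point of $\widetilde{H}$, the point $b$ is a left density point of $\widetilde{H}$, and for every $r\in(0,b-a)$ $$\max\Big\{\frac{|(a,a+r)\setminus\widetilde{H}|}{r},\ \frac{|(b-r,b)\setminus\widetilde{H}|}{r}\Big\}<\varepsilon.$$
   Context: $|A|$ denotes Lebesgue measure. A point $x$ is a right (resp. left) density point of a set $A$ if for every sequence of intervals $I_n=[x,x+r_n]$ (resp. $I_n=[x-r_n,x]$) with $r_n\searrow0$ we have $|A\cap I_n|/|I_n|\to1$. *)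

(* Defs.v *)
From mathcomp Require Import all_boot all_order all_algebra.
From mathcomp Require Import all_classical all_reals all_analysis.
Import Order.TTheory GRing.Theory Num.Theory numFieldNormedType.Exports.
Local Open Scope classical_set_scope.
Local Open Scope ring_scope.

(* Lebesgue measurable sets of R: the Caratheodory-measurable sets of the
   Lebesgue outer measure (= the completion of the Borel sigma-algebra). *)
Definition Lmeasurable {R : realType} (A : set R) : Prop :=
  ((@wlength R idfun)^*%mu).-cara.-measurable A.

Definition Lmeasure {R : realType} (A : set R) : \bar R :=
  completed_lebesgue_measure A.

Definition right_density_point {R : realType} (A : set R) (x : R) : Prop :=
  forall r : nat -> R,
    (forall n, 0 < r n) ->
    (forall m n, (m <= n)%N -> r n <= r m) ->
    r @ \oo --> (0 : R) ->
    (fun n => fine (Lmeasure (A `&` `[x, x + r n]%classic)) / r n) @ \oo --> (1 : R).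

Definition left_density_point {R : realType} (A : set R) (x : R) : Prop :=
  forall r : nat -> R,
    (forall n, 0 < r n) ->
    (forall m n, (m <= n)%N -> r n <= r m) ->
    r @ \oo --> (0 : R) ->
    (fun n => fine (Lmeasure (A `&` `[x - r n, x]%classic)) / r n) @ \oo --> (1 : R).

(* Main.v *)
Require Import Defs.
From mathcomp Require Import all_boot all_order all_algebra.
From mathcomp Require Import all_classical all_reals all_analysis.
From mathcomp Require Import lra ring.
Import Order.TTheory GRing.Theory Num.Theory numFieldNormedType.Exports.
Local Open Scope classical_set_scope.
Local Open Scope ring_scope.

Section P1.
Context {R : realType}.
Notation mu := (@lebesgue_measure R).
Local Open Scope ereal_scope.

Lemma LmE (A : set R) : Lmeasure A = mu A.
Proof. reflexivity. Qed.

Lemma Lmeas_borel (Ht : set R) : Lmeasurable Ht ->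
  exists F : set R, [/\ measurable F, Ht `<=` F & mu (F `\` Ht) = 0].
Proof.
rewrite /Lmeasurable -completed_caratheodory_measurable g_sigma_completed_algebra_genE.
move=> [A mA [N [B [mB B0 NB]] <-]].
exists (A `|` B); split.
- exact: measurableU.
- by move=> x [Ax|Nx]; [left|right; apply: NB].
- apply/eqP; rewrite eq_le measure_ge0 andbT -B0 le_outer_measure//.
  by move=> x [[Ax|Bx] H]; [exfalso; apply: H; left|].
Qed.

Lemma mu_le {X Y : set R} : X `<=` Y -> mu X <= mu Y.
Proof. exact: (le_outer_measure mu X Y). Qed.

Lemma mu_null_eq (X Y N : set R) : X `<=` Y -> Y `<=` X `|` N -> mu N = 0 ->
  mu X = mu Y.
Proof.
move=> XY YXN N0; apply/eqP; rewrite eq_le le_outer_measure//=.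
have h1 : mu Y <= mu (X `|` N) := le_outer_measure mu _ _ YXN.
have h2 : mu (X `|` N) <= mu X + mu N := outer_measureU2 mu X N.
by rewrite N0 adde0 in h2; exact: le_trans h1 h2.
Qed.

End P1.


Section P2.
Context {R : realType}.
Notation mu := (@lebesgue_measure R).

Definition nice (A : set R) (x : R) := A x /\ forall th : R, 0 < th ->
  exists2 d : R, 0 < d & forall r, 0 < r -> r < d ->
    (mu (~` A `&` ball x r) <= (th * r)%:E)%E.

Lemma near_right {P : R -> Prop} : (\forall r \near 0^'+, P r) ->
  exists2 d : R, 0 < d & forall r, 0 < r -> r < d -> P r.
Proof.
move=> [d /= d0 Hd]; exists d => // r r0 rd; apply: Hd => //=.
by rewrite sub0r normrN gtr0_norm.
Qed.

Lemma mu_ball_fin (x r : R) : (mu (ball x r) < +oo)%E.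
Proof.
have [r0|r0] := leP r 0.
  by rewrite ((ball0 _ _).2 r0) measure0.
by rewrite lebesgue_measure_ball ?ltry// ltW.
Qed.

Lemma nice_ae (A : set R) : measurable A ->
  exists N, [/\ measurable N, mu N = 0%E & A `\` nice A `<=` N].
Proof.
move=> mA; have [N [mN N0 HN]] := lebesgue_density mA.
exists N; split => // x [Ax nx]; apply: HN => /= Px; apply: nx; split => // th th0.
move: Px; rewrite indicE mem_set// => /fine_cvgP [Hfin Hcv].
have th20 : 0 < th / 2 by rewrite divr_gt0.
move/cvgrPdist_lt : Hcv => /(_ _ th20) Hn.
have [d1 d10 Hd1] := near_right Hfin.
have [d2 d20 Hd2] := near_right Hn.
exists (Order.min d1 d2); first by rewrite lt_min d10 d20.
move=> r r0; rewrite lt_min => /andP[rd1 rd2].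
have fin1 := Hd1 r r0 rd1; have lt1 := Hd2 r r0 rd2.
move: fin1 lt1 => /=.
have mb : measurable (ball x r) by exact: measurable_realfun.measurable_ball.
have mAb : measurable (A `&` ball x r) by exact: measurableI.
have mCb : measurable (~` A `&` ball x r) by apply: measurableI => //; exact: measurableC.
have Eb : mu (ball x r) = (mu (A `&` ball x r) + mu (~` A `&` ball x r))%E.
  rewrite (measureDI mu mb mA) addeC; congr (_ + _)%E.
  by rewrite setIC.
  by rewrite setDE setIC.
have finA : (mu (A `&` ball x r) \is a fin_num)%E.
  rewrite ge0_fin_numE// (le_lt_trans _ (mu_ball_fin x r))//.
  by apply: le_measure; rewrite ?inE//; apply: subIsetr.
have finC : (mu (~` A `&` ball x r) \is a fin_num)%E.
  rewrite ge0_fin_numE// (le_lt_trans _ (mu_ball_fin x r))//.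
  by apply: le_measure; rewrite ?inE//; apply: subIsetr.
move: Eb; rewrite (lebesgue_measure_ball _ (ltW r0)) -(fineK finA) -(fineK finC).
set a := fine _; set c := fine _ => Eb _.
move: Eb => /esym/eqP; rewrite -EFinD eqe => /eqP Eb.
rewrite inver mulrn_eq0 (gt_eqF r0) /= lee_fin.
move=> /(le_lt_trans (ler_norm _)) H.
have r20 : 0 < r *+ 2 by rewrite mulrn_wgt0.
have := H; rewrite -(ltr_pM2r r20) mulrBl mul1r divfK ?gt_eqF// => H2.
have e2 : th / 2 * (r *+ 2) = th * r by rewrite mulr2n; field.
rewrite e2 in H2; apply: ltW; rewrite mulr2n in Eb H2.
lra.
Qed.

End P2.


Section P3.
Context {R : realType}.
Notation mu := (@lebesgue_measure R).

Lemma dens_gen (A : set R) (y : R) (I : R -> set R) : measurable A -> nice A y ->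
  (forall s, 0 < s -> [/\ measurable (I s), mu (I s) = s%:E & I s `<=` ball y (s *+ 2)]) ->
  forall r : nat -> R, (forall n, 0 < r n) -> r @ \oo --> (0 : R) ->
  (fun n => fine (mu (A `&` I (r n))) / r n) @ \oo --> (1 : R).
Proof.
move=> mA [Ay ny] HI r r0 rc.
apply/cvgrPdist_le => e e0.
have e20 : 0 < e / 2 by rewrite divr_gt0.
have [d d0 Hd] := ny _ e20.
have d20 : 0 < d / 2 by rewrite divr_gt0.
move/cvgrPdist_lt : rc => /(_ _ d20) rc.
near=> n.
have rd : r n < d / 2.
  by near: n; apply: filterS rc => m; rewrite sub0r normrN gtr0_norm.
have [mI muI Isub] := HI _ (r0 n).
have r20 : 0 < r n *+ 2 by rewrite mulrn_wgt0.
have r2d : r n *+ 2 < d.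
  rewrite mulr2n; lra.
have H1 := Hd (r n *+ 2) r20 r2d.
have mAI : measurable (A `&` I (r n)) by exact: measurableI.
have mCI : measurable (~` A `&` I (r n)) by apply: measurableI => //; exact: measurableC.
have EI : mu (I (r n)) = (mu (A `&` I (r n)) + mu (~` A `&` I (r n)))%E.
  rewrite (measureDI mu mI mA) addeC; congr (_ + _)%E.
  by rewrite setIC.
  by rewrite setDE setIC.
have CIle : (mu (~` A `&` I (r n)) <= mu (~` A `&` ball y (r n *+ 2)))%E.
  exact: (mu_le (@setIS _ (~` A) _ _ Isub)).
have finA : (mu (A `&` I (r n)) \is a fin_num)%E.
  by rewrite ge0_fin_numE// (le_lt_trans (mu_le (@subIsetr _ A (I (r n)))))// muI ltry.
have finC : (mu (~` A `&` I (r n)) \is a fin_num)%E.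
  by rewrite ge0_fin_numE// (le_lt_trans (mu_le (@subIsetr _ (~` A) (I (r n)))))// muI ltry.
move: EI CIle; rewrite muI -(fineK finA) -(fineK finC) /=.
set a := fine _; set c := fine _.
rewrite -EFinD => /eqP; rewrite eqe => /eqP Eb.
move=> /le_trans /(_ H1); rewrite lee_fin => Hc.
have c0 : 0 <= c by rewrite /c fine_ge0.
have -> : a = r n - c by rewrite Eb addrK.
rewrite mulrBl divff ?gt_eqF// opprB addrC subrK ger0_norm; last first.
  by rewrite divr_ge0// ltW.
have ee : e / 2 * (r n *+ 2) = e * r n by rewrite mulr2n; field.
by rewrite ler_pdivrMr// -ee.
Unshelve. all: by end_near.
Qed.

End P3.


Section P4.
Context {R : realType}.
Notation mu := (@lebesgue_measure R).

Lemma int_abs_indic (S D : set R) : measurable S -> measurable D ->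
  (\int[mu]_(y in D) `|(\1_S y)%:E| = mu (S `&` D))%E.
Proof.
move=> mS mD.
under eq_integral => y _ do rewrite gee0_abs ?lee_fin ?indicE ?ler0n//.
rewrite -(integral_indic mu mD mS); apply: eq_integral => y _.
by rewrite indicE.
Qed.

Lemma HL_bound (S : set R) (y r eta : R) : measurable S -> 0 < r ->
  (HL_maximal \1_S y <= eta%:E)%E -> (mu (S `&` ball y r) <= (eta * (r *+ 2))%:E)%E.
Proof.
move=> mS r0 HL.
have r20 : 0 < r *+ 2 by rewrite mulrn_wgt0.
have : (iavg \1_S (ball y r) <= eta%:E)%E.
  apply: le_trans HL; apply: ereal_sup_ubound => /=.
  by exists r => //; rewrite in_itv/= r0.
rewrite /iavg int_abs_indic//; last exact: measurable_realfun.measurable_ball.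
rewrite (lebesgue_measure_ball _ (ltW r0)).
rewrite inver mulrn_eq0 (gt_eqF r0) /=.
have fin : (mu (S `&` ball y r) \is a fin_num)%E.
  rewrite ge0_fin_numE// (le_lt_trans (mu_le (@subIsetr _ S (ball y r))))//.
  exact: mu_ball_fin.
rewrite -(fineK fin) -EFinM !lee_fin => H.
by rewrite -ler_pdivrMr// mulrC.
Qed.

Lemma HL_small (S : set R) (eta : R) : measurable S -> 0 < eta ->
  (mu [set y | (eta%:E < HL_maximal \1_S y)%E] <= (3 / eta)%:E * mu S)%E.
Proof.
move=> mS eta0.
have := maximal_inequality (locally_integrable_indic openT mS) eta0.
by rewrite /= int_abs_indic// setIT.
Qed.

Lemma rdens (Ht A : set R) y : measurable A -> Ht `<=` A -> mu (A `\` Ht) = 0%E ->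
  nice A y -> right_density_point Ht y.
Proof.
move=> mA HA A0 ny r r0 _ rc.
have -> : (fun n => fine (Lmeasure (Ht `&` `[y, y + r n])) / r n) =
          (fun n => fine (mu (A `&` (fun s => `[y, y + s]%classic) (r n))) / r n).
  apply: funext => n; rewrite LmE; congr (fine _ / _).
  apply: (@mu_null_eq _ _ _ (A `\` Ht)) => //; first by apply: setSI.
  by move=> z [Az Iz]; have [Htz|nHtz] := pselect (Ht z); [left|right].
apply: (@dens_gen _ A y (fun s => `[y, y + s]%classic) mA ny _ r r0 rc) => s s0; split.
- exact: measurable_itv.
- by rewrite lebesgue_measure_itv/= lte_fin ltrDl s0 -EFinD addrAC subrr add0r.
- move=> z; rewrite /= in_itv/= => /andP[yz zy].
  rewrite /ball/= ltr_distlC; apply/andP; split; rewrite mulr2n; lra.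
Qed.

Lemma ldens (Ht A : set R) y : measurable A -> Ht `<=` A -> mu (A `\` Ht) = 0%E ->
  nice A y -> left_density_point Ht y.
Proof.
move=> mA HA A0 ny r r0 _ rc.
have -> : (fun n => fine (Lmeasure (Ht `&` `[y - r n, y])) / r n) =
          (fun n => fine (mu (A `&` (fun s => `[y - s, y]%classic) (r n))) / r n).
  apply: funext => n; rewrite LmE; congr (fine _ / _).
  apply: (@mu_null_eq _ _ _ (A `\` Ht)) => //; first by apply: setSI.
  by move=> z [Az Iz]; have [Htz|nHtz] := pselect (Ht z); [left|right].
apply: (@dens_gen _ A y (fun s => `[y - s, y]%classic) mA ny _ r r0 rc) => s s0; split.
- exact: measurable_itv.
- by rewrite lebesgue_measure_itv/= lte_fin ltrBlDr ltrDl s0 -EFinD opprB addrC subrK.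
- move=> z; rewrite /= in_itv/= => /andP[yz zy].
  rewrite /ball/= ltr_distlC; apply/andP; split; rewrite mulr2n; lra.
Qed.

End P4.


Section P5.
Context {R : realType}.
Notation mu := (@lebesgue_measure R).

Lemma exists_not_in (K X : set R) : (mu X < mu K)%E -> exists y, K y /\ ~ X y.
Proof.
move=> XK; apply: contrapT => H.
have KX : K `<=` X.
  move=> y Ky; apply: contrapT => nXy; apply: H; by exists y.
by move: XK; rewrite ltNge (mu_le KX).
Qed.

Lemma mu_U3 (X Y Z : set R) : (mu (X `|` Y `|` Z) <= mu X + mu Y + mu Z)%E.
Proof.
have h1 : (mu (X `|` Y `|` Z) <= mu (X `|` Y) + mu Z)%E := outer_measureU2 mu _ _.
have h2 : (mu (X `|` Y) <= mu X + mu Y)%E := outer_measureU2 mu _ _.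
by apply: (le_trans h1); rewrite leeD2r.
Qed.

Definition goodI (A U : set R) (eps : R) (a b : R) :=
  [/\ a < b, nice A a, nice A b, `]a, b[%classic `<=` U &
    forall r, 0 < r -> r < b - a ->
      (mu (`]a, (a + r)%R[%classic `\` A) <= (eps / 2 * r)%:E)%E /\
      (mu (`](b - r)%R, b[%classic `\` A) <= (eps / 2 * r)%:E)%E].

Lemma claim (A U : set R) (eps : R) : measurable A -> open U -> A `<=` U -> 0 < eps ->
  forall x, nice A x -> forall e, 0 < e ->
  exists a b, [/\ goodI A U eps a b, a < x, x < b & b - a < e].
Proof.
move=> mA oU AU eps0 x nx e e0.
have [dU dU0 HdU] := near_right (open_subball oU (AU _ nx.1)).
pose eta := Order.min eps 1 / 4.
have eta0 : 0 < eta by rewrite divr_gt0// lt_min eps0 ltr01.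
have eta1 : eta <= 1 / 4 by rewrite ler_pM2r ?invr_gt0// ge_min lexx orbT.
have etaeps : eta * 2 <= eps / 2.
  have : Order.min eps 1 <= eps by rewrite ge_min lexx.
  rewrite /eta; lra.
pose th := eta / 100.
have th0 : 0 < th by rewrite divr_gt0.
have [d0 d00 Hd0] := nx.2 _ th0.
pose del := Order.min (Order.min d0 e) dU / 8.
have del0 : 0 < del by rewrite divr_gt0// !lt_min d00 e0 dU0.
have deld0 : del * 4 < d0.
  have : Order.min (Order.min d0 e) dU <= d0 by rewrite !ge_min lexx.
  rewrite /del; lra.
have dele : del * 2 < e.
  have : Order.min (Order.min d0 e) dU <= e by rewrite !ge_min lexx orbT.
  rewrite /del; lra.
have deldU : del < dU.
  have : Order.min (Order.min d0 e) dU <= dU by rewrite !ge_min lexx !orbT.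
  rewrite /del; lra.
pose J := ball x (del * 4).
pose S := ~` A `&` J.
have mS : measurable S.
  by apply: measurableI; [exact: measurableC|exact: measurable_realfun.measurable_ball].
have muS : (mu S <= (th * (del * 4))%:E)%E.
  by apply: Hd0 => //; rewrite mulr_gt0.
pose Bad := [set y | (eta%:E < HL_maximal \1_S y)%E].
have muBad : (mu Bad <= (3 / eta * (th * (del * 4)))%:E)%E.
  have h : (mu Bad <= (3 / eta)%:E * mu S)%E := HL_small S eta mS eta0.
  apply: (le_trans h); rewrite [in leRHS]EFinM; apply: lee_wpmul2l => //.
  by rewrite lee_fin divr_ge0// ltW.
have [N [mN N0 HN]] := nice_ae A mA.
have pick (c : R) : `]c, c + del / 2[ `<=` J ->
    exists y, [/\ c < y, y < c + del / 2, nice A y &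
      forall r, 0 < r -> (mu (S `&` ball y r) <= (eta * (r *+ 2))%:E)%E].
  move=> cJ.
  have [|y [Ky nXy]] := @exists_not_in `]c, c + del / 2[ (S `|` Bad `|` N).
    apply: (le_lt_trans (mu_U3 _ _ _)); rewrite N0 adde0.
    rewrite lebesgue_measure_itv/= lte_fin ltrDl divr_gt0// -EFinD addrAC subrr add0r.
    apply: (le_lt_trans (leeD muS muBad)); rewrite -EFinD lte_fin.
    have -> : 3 / eta * (th * (del * 4)) = del * 12 / 100 by rewrite /th; field; lra.
    rewrite /th; nra.
  move: Ky; rewrite /= in_itv/= => /andP[cy yc].
  have Ay : A y.
    apply: contrapT => nAy; apply: nXy; left; left; split => //.
    by apply: cJ; rewrite /= in_itv/= cy yc.
  have ny : nice A y.
    apply: contrapT => nny; apply: nXy; right; exact: HN.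
  exists y; split => // r r0; apply: HL_bound => //.
  by rewrite leNgt; apply/negP => H; apply: nXy; left; right.
have PA : `]x - del, x - del + del / 2[ `<=` J.
  move=> z; rewrite /= in_itv/= => /andP[z1 z2].
  rewrite /J /ball/= ltr_distlC; apply/andP; split; lra.
have [a [a1 a2 na Ha]] := pick _ PA.
have PB : `]x + del / 2, x + del / 2 + del / 2[ `<=` J.
  move=> z; rewrite /= in_itv/= => /andP[z1 z2].
  rewrite /J /ball/= ltr_distlC; apply/andP; split; lra.
have [b [b1 b2 nb Hb]] := pick _ PB.
exists a, b; split; [|lra|lra|lra].
split => //; first lra.
  move=> z; rewrite /= in_itv/= => /andP[z1 z2].
  apply: (HdU del) => //; rewrite /ball/= ltr_distlC; apply/andP; split; lra.
move=> r r0 rba; split.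
- have sub : `]a, a + r[ `\` A `<=` S `&` ball a r.
    move=> z [/=]; rewrite in_itv/= => /andP[z1 z2] nAz; split; first split => //.
      rewrite /J /ball/= ltr_distlC; apply/andP; split; lra.
    rewrite /ball/= ltr_distlC; apply/andP; split; lra.
  apply: (le_trans (mu_le sub)); apply: (le_trans (Ha r r0)); rewrite lee_fin.
  rewrite mulr2n; nra.
- have sub : `]b - r, b[ `\` A `<=` S `&` ball b r.
    move=> z [/=]; rewrite in_itv/= => /andP[z1 z2] nAz; split; first split => //.
      rewrite /J /ball/= ltr_distlC; apply/andP; split; lra.
    rewrite /ball/= ltr_distlC; apply/andP; split; lra.
  apply: (le_trans (mu_le sub)); apply: (le_trans (Hb r r0)); rewrite lee_fin.
  rewrite mulr2n; nra.
Qed.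

End P5.


Section P6.
Context {R : realType}.

Lemma itv_oo_is_interval (a b : R) : is_interval `]a, b[%classic.
Proof.
move=> u v; rewrite /= !in_itv/= => /andP[u1 u2] /andP[v1 v2] z /andP[z1 z2].
apply/andP; split; [exact: lt_le_trans z1|exact: le_lt_trans z2 v2].
Qed.

Lemma cc_itv (H : set R) (a b x : R) : a < x -> x < b ->
  `]a, b[%classic `<=` H -> ~ H a -> ~ H b ->
  connected_component H x = `]a, b[%classic.
Proof.
move=> ax xb abH nHa nHb; apply/seteqP; split; last first.
  apply: connected_component_max => //.
    by rewrite /= in_itv/= ax xb.
  by apply/connected_intervalP; exact: itv_oo_is_interval.
move=> y ccy.
have /connected_intervalP ci := @component_connected _ H x.
have ccx : connected_component H x x by apply: connected_component_refl; apply: abH; rewrite /= in_itv/= ax xb.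
rewrite /= in_itv/=; apply/andP; split.
- rewrite ltNge; apply/negP => ya; apply: nHa.
  apply: (connected_component_sub (x := x)).
  by apply: (ci y x ccy ccx); rewrite ya ltW.
- rewrite ltNge; apply/negP => by_; apply: nHb.
  apply: (connected_component_sub (x := x)).
  by apply: (ci x y ccx ccy); rewrite by_ ltW.
Qed.

Lemma itv_oo_inj (a b a' b' : R) : a < b ->
  `]a, b[%classic = `]a', b'[%classic :> set R -> a = a' /\ b = b'.
Proof.
move=> ab E.
have mem z : (a < z < b) = (a' < z < b').
  have := congr1 (fun S : set R => S z) E; rewrite /= !in_itv/= => h.
  by apply/idP/idP => H; [rewrite -h|rewrite h].
have a'b' : a' < b'.
  have := mem ((a + b) / 2); rewrite (_ : a < (a + b) / 2 < b = true); last first.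
    by apply/andP; split; lra.
  move/esym/andP => [h1 h2]; lra.
have ea : a = a'.
  apply/eqP; rewrite eq_le; apply/andP; split.
  - rewrite leNgt; apply/negP => h.
    have := mem ((a' + Order.min a b') / 2).
    have m1 : Order.min a b' <= a by rewrite ge_min lexx.
    have m2 : Order.min a b' <= b' by rewrite ge_min lexx orbT.
    have m3 : a' < Order.min a b' by rewrite lt_min h a'b'.
    have -> : a' < (a' + Order.min a b') / 2 < b' = true by apply/andP; split; lra.
    by move/andP => [h1 _]; lra.
  - rewrite leNgt; apply/negP => h.
    have := mem ((a + Order.min a' b) / 2).
    have m1 : Order.min a' b <= a' by rewrite ge_min lexx.
    have m2 : Order.min a' b <= b by rewrite ge_min lexx orbT.
    have m3 : a < Order.min a' b by rewrite lt_min h ab.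
    have -> : a < (a + Order.min a' b) / 2 < b = true by apply/andP; split; lra.
    by move/esym/andP => [h1 _]; lra.
split => //.
apply/eqP; rewrite eq_le; apply/andP; split.
- rewrite leNgt; apply/negP => h.
  have := mem ((Order.max b' a + b) / 2).
  have m1 : b' <= Order.max b' a by rewrite le_max lexx.
  have m2 : a <= Order.max b' a by rewrite le_max lexx orbT.
  have m3 : Order.max b' a < b by rewrite gt_max h ab.
  have -> : a < (Order.max b' a + b) / 2 < b = true by apply/andP; split; lra.
  by move/esym/andP => [_ h2]; lra.
- rewrite leNgt; apply/negP => h.
  have := mem ((Order.max b a' + b') / 2).
  have m1 : b <= Order.max b a' by rewrite le_max lexx.
  have m2 : a' <= Order.max b a' by rewrite le_max lexx orbT.
  have m3 : Order.max b a' < b' by rewrite gt_max h a'b'.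
  have -> : a < (Order.max b a' + b') / 2 < b = false.
    by apply/negbTE/negP => /andP[_ h2]; lra.
  have -> : a' < (Order.max b a' + b') / 2 < b' = true by apply/andP; split; lra.
  by [].
Qed.

End P6.


Theorem lemma4p1 (R : realType) (U Ht : set R) (eps : R) :
  open U -> Ht `<=` U -> Lmeasurable Ht -> 0 < eps ->
  exists H : set R,
    [/\ open H, H `<=` U, Lmeasure (Ht `\` H) = 0%E &
      forall a b : R,
        (exists x, H x /\ connected_component H x = `]a, b[%classic) ->
        [/\ right_density_point Ht a, left_density_point Ht b &
          forall r : R, 0 < r < b - a ->
            Num.max (fine (Lmeasure (`]a, a + r[%classic `\` Ht)) / r)
                    (fine (Lmeasure (`]b - r, b[%classic `\` Ht)) / r) < eps]].
Proof.
move=> oU HtU mHt eps0.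
have [F [mF HtF F0]] := Lmeas_borel Ht mHt.
pose A := F `&` U.
have mU : measurable U := measurable_realfun.open_measurable oU.
have mA : measurable A by exact: measurableI.
have HtA : Ht `<=` A by move=> z Hz; split; [exact: HtF|exact: HtU].
have A0 : lebesgue_measure (A `\` Ht) = 0%E.
  apply/eqP; rewrite eq_le measure_ge0 andbT -F0.
  by apply: mu_le => z [[Fz _] nz].
have AU : A `<=` U by move=> z [].
have [N [mN N0 HN]] := nice_ae A mA.
pose T := (rat * rat * rat * rat)%type.
pose P (k : nat) (ab : R * R) : Prop :=
  if @unpickle T k is Some (s, p, q, t) then
    [/\ goodI A U eps ab.1 ab.2, ratr s < ab.1, ab.1 < ratr p,
        ratr q < ab.2 & ab.2 < ratr t]
  else False.
pose V := [set k | exists ab, P k ab].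
pose ab_ (k : nat) : R * R :=
  match pselect (exists ab, P k ab) with
  | left H => projT1 (cid H)
  | right _ => (0, 1) end.
have abP k : V k -> P k (ab_ k).
  rewrite /ab_; case: pselect => // H _; exact: (projT2 (cid H)).
have Plt k ab : P k ab -> ab.1 < ab.2.
  rewrite /P; case: (unpickle k) => // [[[[s p] q] t]].
  by move=> [[]].
have ablt k : (ab_ k).1 < (ab_ k).2.
  rewrite /ab_; case: pselect => [H|_]; last by rewrite /= ltr01.
  exact: Plt (projT2 (cid H)).
pose B k := ball (((ab_ k).1 + (ab_ k).2) / 2) (((ab_ k).2 - (ab_ k).1) / 2).
have BE k : B k = `](ab_ k).1, (ab_ k).2[%classic.
  rewrite /B ball_itv; set a := (ab_ k).1; set b := (ab_ k).2.
  have -> : (a + b) / 2 - (b - a) / 2 = a by field.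
  by have -> : (a + b) / 2 + (b - a) / 2 = b by field.
have B0 k : 0 < (radius (B k))%:num.
  rewrite radius_ball_num; first by have := ablt k; lra.
  by have := ablt k; lra.
have cover : vitali_cover [set x | nice A x] B V.
  split; first by move=> k; exact: is_ball_ball.
  move=> x nx e e0.
  have [a [b [gab ax xb bae]]] := claim A U eps mA oU AU eps0 x nx e e0.
  have [p] := rat_in_itvoo ax; rewrite in_itv/= => /andP[ap px].
  have [q] := rat_in_itvoo xb; rewrite in_itv/= => /andP[xq qb].
  pose g := (e - (b - a)) / 2.
  have g0 : 0 < g by rewrite /g; lra.
  have ag : a - g < a by lra.
  have bg : b < b + g by lra.
  have [s] := rat_in_itvoo ag; rewrite in_itv/= => /andP[sa1 sa2].
  have [t] := rat_in_itvoo bg; rewrite in_itv/= => /andP[tb1 tb2].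
  pose k := pickle ((s, p, q, t) : T).
  have Vk : V k.
    rewrite /V /=; exists (a, b); rewrite /P /k pickleK /=; by split.
  have := abP k Vk; rewrite /P /k pickleK => -[_ h1 h2 h3 h4].
  exists k; split => //.
  - by rewrite BE /= in_itv/=; apply/andP; split; lra.
  - rewrite radius_ball_num; last by have := ablt k; lra.
    have gd : g * 2 = e - (b - a) by rewrite /g; field.
    rewrite /k; lra.
have [D [_ DV tD muD]] := vitali_theorem B0 cover.
pose H := \bigcup_(k in D) B k.
have goodk k : D k -> goodI A U eps (ab_ k).1 (ab_ k).2.
  move=> /DV /abP; rewrite /P; case: (unpickle k) => // [[[[s p] q] t]].
  by case.
have endp k : D k -> ~ H (ab_ k).1 /\ ~ H (ab_ k).2.
  move=> Dk.
  have cl y : (ab_ k).1 <= y <= (ab_ k).2 -> closure (B k) y.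
    move=> /andP[y1 y2]; rewrite /B closure_ballE closed_ball_itv; last first.
      by have := ablt k; lra.
    rewrite /= in_itv/=; apply/andP; split; lra.
  have gen y : (ab_ k).1 <= y <= (ab_ k).2 -> ~ B k y -> ~ H y.
    move=> yin nBy [j Dj Bjy].
    have jk : j = k.
      apply: tD => //; exists y; split; last exact: cl.
      by apply: subset_closure.
    by subst j.
  have l := ablt k.
  split; apply: gen; rewrite ?BE /= ?in_itv/= ?ltxx ?andbF//.
  - by rewrite lexx ltW.
  - by rewrite lexx ltW.
exists H; split.
- by apply: bigcup_open => k _; exact: ball_open.
- move=> z [k Dk]; rewrite BE => Bz.
  by have [_ _ _ sub _] := goodk k Dk; apply: sub.
- rewrite LmE.
  pose Z := \bigcup_k (closure (B k) `\` B k).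
  have Zneg : lebesgue_measure.-negligible Z.
    apply: negligible_bigcup => k.
    exists (closure (B k) `\` B k); split => //.
    + apply: measurableD; last exact: measurable_realfun.measurable_ball.
      by rewrite /B closure_ballE; exact: measurable_realfun.measurable_closed_ball.
    + have r0 : 0 < ((ab_ k).2 - (ab_ k).1) / 2 by have := ablt k; lra.
      rewrite /B closure_ballE.
      set c := (((ab_ k).1 + (ab_ k).2) / 2); set rr := (((ab_ k).2 - (ab_ k).1) / 2).
      have mcb := measurable_realfun.measurable_closed_ball c rr.
      have mb := measurable_realfun.measurable_ball c rr.
      have fin : (lebesgue_measure (closed_ball c rr) < +oo)%E.
        by rewrite (lebesgue_measure_closed_ball _ (ltW r0)) ltry.
      have e1 : lebesgue_measure (closed_ball c rr `\` ball c rr) =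
        (lebesgue_measure (closed_ball c rr) - lebesgue_measure (closed_ball c rr `&` ball c rr))%E
        := measureD (mu := lebesgue_measure) mcb mb fin.
      apply: (etrans e1); rewrite setIidr; last exact: subset_closed_ball.
      rewrite (lebesgue_measure_closed_ball _ (ltW r0)) (lebesgue_measure_ball _ (ltW r0)).
      by rewrite subee.
  have [G [mG G0 ZG]] := Zneg.
  pose X2 := [set x | nice A x] `\` \bigcup_(k in D) closure (B k).
  have sub : Ht `\` H `<=` N `|` X2 `|` G.
    move=> z [Htz nHz].
    have Az := HtA _ Htz.
    have [nz|nnz] := pselect (nice A z); last by left; left; apply: HN.
    have [[k Dk ck]|ncl] := pselect ((\bigcup_(k in D) closure (B k)) z).
      right; apply: ZG; exists k => //; split => // Bkz; apply: nHz.
      by exists k.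
    by left; right; split.
  apply/eqP; rewrite eq_le measure_ge0 andbT.
  apply: (le_trans (mu_le sub)); apply: (le_trans (mu_U3 _ _ _)).
  by rewrite N0 muD G0 !adde0.
- move=> a b [x [[k Dk Bkx] ccx]].
  have [nH1 nH2] := endp k Dk.
  have Hsub : `](ab_ k).1, (ab_ k).2[%classic `<=` H.
    by move=> z zin; exists k => //; rewrite BE.
  move: (Bkx); rewrite BE /= in_itv/= => /andP[x1 x2].
  have cc := @cc_itv _ H _ _ _ x1 x2 Hsub nH1 nH2.
  rewrite cc in ccx.
  have [ea eb] := @itv_oo_inj _ _ _ _ _ (ablt k) ccx.
  have [_ na nb _ bnd] := goodk k Dk.
  rewrite -ea -eb; split.
  + exact: (rdens Ht A _ mA HtA A0 na).
  + exact: (ldens Ht A _ mA HtA A0 nb).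
  + move=> r /andP[r0 rba].
    have [h1 h2] := bnd r r0 rba.
    have tr (X : set R) : lebesgue_measure (X `\` Ht) = lebesgue_measure (X `\` A).
      apply/esym; apply: (@mu_null_eq _ _ _ (A `\` Ht)) => //.
        by move=> z [Xz nAz]; split => // Hz; apply: nAz; exact: HtA.
      by move=> z [Xz nHz]; have [Az|nAz] := pselect (A z); [right|left].
    have fl (m : \bar R) : (0 <= m)%E -> (m <= (eps / 2 * r)%:E)%E -> fine m / r < eps.
      move=> m0 hm.
      have fin : (m \is a fin_num)%E.
        by rewrite ge0_fin_numE// (le_lt_trans hm)// ltry.
      move: hm; rewrite -(fineK fin) lee_fin => hm.
      rewrite ltr_pdivrMr//; apply: (le_lt_trans hm).
      rewrite ltr_pM2r//; lra.
    rewrite gt_max; apply/andP; split; rewrite LmE tr; exact: fl.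
Qed.
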